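(* For each $k\in\mathbb{N}$ let $S_k$ be a nonempty set of setfunctions on $(\,[k],2^{[k]})$, and assume that $S=\bigcup_k S_k$ is quotient-closed and has the common lift property. Then there are setfunctions $\varphi_k\in S_k$ ($k\in\mathbb{N}$) such that $(\varphi_n\colon n\in\mathbb{N})$ is a tower and, for every $k$, $\bigcup_n Q_k(\varphi_n)$ is a dense subset of $S_k$.
   Context: A setfunction on a set-algebra $(J,\mathcal{B})$ is a map $\varphi\colon\mathcal{B}\to\mathbb{R}$ with $\varphi(\emptyset)=0$; $[k]=\{1,\dots,k\}$, $\mathbb{N}$ the positive integers. For a measurable map $F\colon J\to[k]$, the quotient $\varphi\circ F^{-1}$ is the setfunction $A\mapsto\varphi(F^{-1}(A))$ on $2^{[k]}$; $Q_k(\varphi)\subseteq\mathbb{R}^{2^k}$ is the set of all quotients of $\varphi$ on $[k]$. $\varphi$ is a lift of $\varphi'$ if $\varphi'$ is a quotient of $\varphi$. A family $A$ of finite setfunctions is quotient-closed if every quotient of a member of $A$ is in $A$, and has the common lift property if every finite subset of $A$ has a common lift in $A$. A tower is a sequence $(\varphi_n)$ of setfunctions on finite set-algebras $(J_n,2^{J_n})$ such that $\varphi_n$ is a quotient of $\varphi_{n+1}$ for every $n$. Density is with respect to the Euclidean topology of $\mathbb{R}^{2^k}$. *)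

(* Defs.v *)
From HB Require Import structures.
From mathcomp Require Import all_boot all_order all_algebra.
From mathcomp Require Import reals.
From Stdlib Require List.
Set Implicit Arguments. Unset Strict Implicit. Unset Printing Implicit Defensive.
Import Order.TTheory GRing.Theory Num.Theory.
Local Open Scope ring_scope.

Definition sfun (R : realType) (k : nat) := {ffun {set 'I_k} -> R}.

Definition is_setfun (R : realType) (k : nat) (phi : sfun R k) : Prop :=
  phi set0 = 0.

Definition quot (R : realType) (m k : nat) (F : 'I_m -> 'I_k) (phi : sfun R m)
  : sfun R k := [ffun A : {set 'I_k} => phi (F @^-1: A)].

Definition is_quot (R : realType) (m k : nat) (phi : sfun R m) (psi : sfun R k)
  : Prop := exists F : 'I_m -> 'I_k, psi = quot F phi.

(* S k is the family S_k (meaningful for k >= 1); S = union_k S_k. *)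
Definition quotient_closed (R : realType) (S : forall k, sfun R k -> Prop) :=
  forall m k (phi : sfun R m) (F : 'I_m -> 'I_k),
    (0 < m)%N -> (0 < k)%N -> S m phi -> S k (quot F phi).

Definition common_lift_property (R : realType) (S : forall k, sfun R k -> Prop) :=
  forall s : seq {k : nat & sfun R k},
    (forall p, List.In p s -> (0 < projT1 p)%N /\ S (projT1 p) (projT2 p)) ->
    exists m, exists psi : sfun R m, [/\ (0 < m)%N, S m psi &
      forall p, List.In p s -> is_quot psi (projT2 p)].

Definition is_tower (R : realType) (phi : forall n, sfun R n) :=
  forall n, (0 < n)%N -> is_quot (phi n.+1) (phi n).

(* \bigcup_{n>=1} Q_k(phi_n) is a dense subset of S_k (Euclidean topology of
   R^{2^k}, expressed with the equivalent max-norm). *)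
Definition dense_quotients_in (R : realType) (k : nat)
    (phi : forall n, sfun R n) (Sk : sfun R k -> Prop) :=
  (forall n (F : 'I_n -> 'I_k), (0 < n)%N -> Sk (quot F (phi n))) /\
  (forall psi, Sk psi -> forall eps : R, 0 < eps ->
     exists n, exists F : 'I_n -> 'I_k, (0 < n)%N /\
       forall A : {set 'I_k}, `|quot F (phi n) A - psi A| < eps).
Arguments dense_quotients_in {R} k phi Sk.

(* Main.v *)
Require Import Defs.
From HB Require Import structures.
From mathcomp Require Import all_boot all_order all_algebra.
From mathcomp Require Import reals.
From Stdlib Require Import ClassicalEpsilon.
Import Order.TTheory GRing.Theory Num.Theory.
Local Open Scope ring_scope.
Set Implicit Arguments. Unset Strict Implicit. Unset Printing Implicit Defensive.

Lemma quot_comp (R : realType) m l k (G : 'I_m -> 'I_l) (F : 'I_l -> 'I_k)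
  (psi : sfun R m) : quot F (quot G psi) = quot (F \o G) psi.
Proof.
apply/ffunP => A; rewrite !ffunE; congr (psi _).
by apply/setP => x; rewrite !inE.
Qed.

Definition qn (R : realType) (N j : nat) (f : nat -> nat) (Psi : sfun R N)
  : sfun R j :=
  match j as j0 return sfun R j0 with
  | 0 => [ffun => 0]
  | j'.+1 => quot (fun y : 'I_N => (inord (f y) : 'I_j'.+1)) Psi
  end.

Lemma qn_comp (R : realType) N l j (f g : nat -> nat) (Psi : sfun R N) :
  (0 < l)%N -> (forall y, (y < N)%N -> (f y < l)%N) ->
  qn j g (qn l f Psi) = qn j (g \o f) Psi.
Proof.
case: l => // l _ Hf; case: j => // j /=.
rewrite quot_comp; apply/ffunP => A; rewrite !ffunE; congr (Psi _).
by apply/setP => x; rewrite !inE /= inordK // Hf.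
Qed.

Lemma qn_ext (R : realType) N j (f g : nat -> nat) (Psi : sfun R N) :
  (forall y, (y < N)%N -> f y = g y) -> qn j f Psi = qn j g Psi.
Proof.
move=> H; case: j => // j /=; apply/ffunP => A; rewrite !ffunE; congr (Psi _).
by apply/setP => x; rewrite !inE /= H.
Qed.

Lemma qn_id (R : realType) N (f : nat -> nat) (Psi : sfun R N) :
  (0 < N)%N -> (forall y, (y < N)%N -> f y = y) -> qn N f Psi = Psi.
Proof.
case: N Psi f => // N Psi f _ H /=; apply/ffunP => A; rewrite !ffunE; congr (Psi _).
apply/setP => x; rewrite !inE /= H //.
by have -> : (inord x : 'I_N.+1) = x by apply/val_inj; rewrite /= inordK.
Qed.

Lemma qn_quot (R : realType) N j (f : nat -> nat) (Psi : sfun R N) :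
  (0 < j)%N -> exists F : 'I_N -> 'I_j, qn j f Psi = quot F Psi.
Proof. by case: j => // j _; eexists. Qed.

Fixpoint Cm (Nf : nat -> nat) (rf : nat -> nat -> nat) (s j y : nat) : nat :=
  match s with
  | 0 => y
  | s'.+1 => if (y < Nf s')%N then Cm Nf rf s' j y
             else if (y < j)%N then y else Cm Nf rf s' j (rf s' y)
  end.

Definition Chyp (Nf : nat -> nat) (rf : nat -> nat -> nat) :=
  [/\ Nf 0 = 1%N, forall s, (Nf s < Nf s.+1)%N,
      forall s y, (y < Nf s)%N -> rf s y = y &
      forall s y, (y < Nf s.+1)%N -> (rf s y < Nf s)%N].

Lemma C_lt Nf rf s j y : (y < j)%N -> Cm Nf rf s j y = y.
Proof. by move=> H; elim: s => //= s ->; rewrite H; case: ifP. Qed.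
Arguments C_lt {Nf rf} s {j y}.

Lemma Nf_ge Nf rf s : Chyp Nf rf -> (s < Nf s)%N.
Proof.
case=> N0 Ns _ _; elim: s => [|s IH]; first by rewrite N0.
exact: leq_ltn_trans IH (Ns s).
Qed.

Lemma Nf_mono Nf rf s t : Chyp Nf rf -> (s <= t)%N -> (Nf s <= Nf t)%N.
Proof.
case=> _ Ns _ _; elim: t => [|t IH]; first by rewrite leqn0 => /eqP ->.
rewrite leq_eqVlt => /orP [/eqP -> //|/IH H].
exact: leq_trans H (ltnW (Ns t)).
Qed.

Lemma C_range Nf rf s j y : Chyp Nf rf -> (0 < j)%N -> (j <= Nf s)%N ->
  (y < Nf s)%N -> (Cm Nf rf s j y < j)%N.
Proof.
move=> Hc; case: (Hc) => N0 Ns r1 r2.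
elim: s y => [|s IH] y j0 jN yN /=.
  by move: jN yN; rewrite N0; case: j j0 => // [[|]] //; case: y.
case: (ltnP y j) => yj; first by rewrite C_lt //; case: ifP.
case: ifP => ys.
  by apply: IH => //; apply: leq_trans yj (ltnW ys).
case: (leqP j (Nf s)) => jS; first by apply: IH => //; apply: r2.
by rewrite C_lt; apply: leq_trans (r2 _ _ yN) (ltnW jS).
Qed.

Lemma C_step Nf rf s j y : Chyp Nf rf -> (j <= Nf s)%N -> (y < Nf s.+1)%N ->
  Cm Nf rf s.+1 j y = Cm Nf rf s j (rf s y).
Proof.
case=> _ _ r1 _ jN yN /=; case: ifP => ys; first by rewrite r1.
by rewrite ltnNge (leq_trans jN) // leqNgt ys.
Qed.

Lemma C_tower Nf rf s j y : Chyp Nf rf -> (0 < j)%N -> (j < Nf s)%N ->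
  (y < Nf s)%N -> Cm Nf rf s j y = Cm Nf rf s j (Cm Nf rf s j.+1 y).
Proof.
move=> Hc; case: (Hc) => N0 Ns r1 r2.
elim: s y => [|s IH] y j0 jN yN; first by [].
case: (ltngtP y j) => yj.
- by rewrite [Cm _ _ _ j.+1 y]C_lt ?C_lt // ltnW.
- have w : ((if (y < Nf s)%N then y else rf s y) < Nf s)%N.
    by case: ifP => // _; apply: r2.
  have eA : forall jj, (jj <= y)%N -> Cm Nf rf s.+1 jj y =
                 Cm Nf rf s jj (if (y < Nf s)%N then y else rf s y).
    move=> jj Hjj /=; case: ifP => // _.
    by rewrite ltnNge Hjj.
  rewrite (eA j (ltnW yj)) (eA j.+1 yj).
  case: (ltnP j (Nf s)) => jS.
  + have zr : (Cm Nf rf s j.+1 (if (y < Nf s)%N then y else rf s y) < j.+1)%N.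
      by apply: C_range.
    rewrite [in RHS]C_step //; [|exact: ltnW|exact: leq_trans zr (leq_trans jS (ltnW (Ns s)))].
    rewrite (r1 s (Cm Nf rf s j.+1 _)); last exact: leq_trans zr jS.
    exact: IH.
  + move: w; case: ifP => ys w.
      by move: (leq_ltn_trans (leq_trans jS (ltnW yj)) ys); rewrite ltnn.
    have rj : (rf s y < j)%N by apply: leq_trans w jS.
    by rewrite (C_lt _ rj) (C_lt _ (ltnW rj : (rf s y < j.+1)%N)) (C_lt _ rj).
- by subst y; rewrite (C_lt _ (ltnSn j)).
Qed.


Definition phiT (R : realType) Nf rf (Psi : forall s, sfun R (Nf s)) (j : nat) :
  sfun R j := qn j (Cm Nf rf j j) (Psi j).
Arguments phiT {R Nf} rf Psi j.

Definition Phyp (R : realType) Nf rf (Psi : forall s, sfun R (Nf s)) :=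
  forall s, qn (Nf s) (rf s) (Psi s.+1) = Psi s.
Arguments Phyp {R Nf} rf Psi.

Lemma indep (R : realType) Nf rf (Psi : forall s, sfun R (Nf s)) s j :
  Chyp Nf rf -> Phyp rf Psi -> (j <= Nf s)%N ->
  qn j (Cm Nf rf s.+1 j) (Psi s.+1) = qn j (Cm Nf rf s j) (Psi s).
Proof.
move=> Hc HP jN; have [_ _ _ r2] := Hc.
rewrite -[in RHS](HP s) qn_comp; [|exact: leq_ltn_trans (leq0n s) (Nf_ge s Hc)|exact: r2].
apply: qn_ext => y yN; exact: C_step.
Qed.

Lemma indep_n (R : realType) Nf rf (Psi : forall s, sfun R (Nf s)) s t j :
  Chyp Nf rf -> Phyp rf Psi -> (s <= t)%N -> (j <= Nf s)%N ->
  qn j (Cm Nf rf t j) (Psi t) = qn j (Cm Nf rf s j) (Psi s).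
Proof.
move=> Hc HP + jN; elim: t => [|t IH]; first by rewrite leqn0 => /eqP ->.
rewrite leq_eqVlt => /orP [/eqP -> //| st]; rewrite ltnS in st.
rewrite indep // ?IH //; exact: leq_trans jN (Nf_mono Hc st).
Qed.

Lemma phiT_eq (R : realType) Nf rf (Psi : forall s, sfun R (Nf s)) s j :
  Chyp Nf rf -> Phyp rf Psi -> (j <= s)%N ->
  phiT rf Psi j = qn j (Cm Nf rf s j) (Psi s).
Proof.
move=> Hc HP js; rewrite /phiT (indep_n Hc HP js) //.
exact: ltnW (Nf_ge j Hc).
Qed.

Lemma phiT_tower (R : realType) Nf rf (Psi : forall s, sfun R (Nf s)) j :
  Chyp Nf rf -> Phyp rf Psi -> (0 < j)%N ->
  is_quot (phiT rf Psi j.+1) (phiT rf Psi j).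
Proof.
move=> Hc HP j0.
rewrite (phiT_eq Hc HP (leqnSn j)).
have -> : qn j (Cm Nf rf j.+1 j) (Psi j.+1) =
          qn j (Cm Nf rf j.+1 j) (phiT rf Psi j.+1).
  rewrite /phiT qn_comp //; last first.
    by move=> y yN; apply: C_range => //; apply: ltnW (Nf_ge j.+1 Hc).
  apply: qn_ext => y yN; apply: C_tower => //.
  exact: ltn_trans (ltnSn j) (Nf_ge j.+1 Hc).
have [F ->] := qn_quot (Cm Nf rf j.+1 j) (phiT rf Psi j.+1) j0.
by exists F.
Qed.

Lemma phiT_Psi (R : realType) Nf rf (Psi : forall s, sfun R (Nf s)) s :
  Chyp Nf rf -> Phyp rf Psi -> phiT rf Psi (Nf s) = Psi s.
Proof.
move=> Hc HP; rewrite /phiT (indep_n Hc HP (ltnW (Nf_ge s Hc))) //.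
apply: qn_id; first exact: leq_ltn_trans (leq0n s) (Nf_ge s Hc).
by move=> y yN; rewrite C_lt.
Qed.

Definition close (R : realType) k (q : {ffun {set 'I_k} -> int}) (N : nat)
  (phi : sfun R k) :=
  forall A, `|phi A - (q A)%:~R / (N.+1)%:R| <= (N.+1)%:R^-1.

Definition dpred (R : realType) (S : forall k : nat, sfun R k -> Prop) k i
  (phi : sfun R k) : Prop := S k phi /\
    match (unpickle i : option ({ffun {set 'I_k} -> int} * nat)) with
    | Some (q, N) => (exists phi', S k phi' /\ close q N phi') -> close q N phi
    | None => True end.

Definition dsel (R : realType) (S : forall k : nat, sfun R k -> Prop) k i
  : sfun R k := epsilon (inhabits [ffun => 0]) (dpred S i).

Lemma dsel_S (R : realType) (S : forall k : nat, sfun R k -> Prop) k i :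
  (exists phi, S k phi) -> S k (dsel S k i).
Proof.
move=> [phi Sphi]; rewrite /dsel; set P := dpred S i.
suff: P (epsilon (inhabits [ffun => 0]) P) by case.
apply: epsilon_spec.
case E: (unpickle i : option ({ffun {set 'I_k} -> int} * nat)) => [[q N]|].
- case: (classic (exists phi', S k phi' /\ close q N phi')) => [[phi' [S' C']]|nE].
    by exists phi'; rewrite /P /dpred E; split => // _.
  by exists phi; rewrite /P /dpred E; split => // /nE.
- by exists phi; rewrite /P /dpred E.
Qed.

Lemma dsel_dense (R : realType) (S : forall k : nat, sfun R k -> Prop) k psi :
  S k psi -> forall eps : R, 0 < eps ->
  exists i, forall A, `|dsel S k i A - psi A| < eps.
Proof.
move=> Spsi eps eps0.
pose N := Num.Def.archi_bound (2 / eps).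
have HN : 2 / eps < N%:R by apply: archi_boundP; rewrite divr_ge0 // ltW.
pose c : R := (N.+1)%:R.
have c0 : 0 < c by rewrite ltr0n.
pose q := [ffun A => Num.floor (psi A * c)].
have Cpsi : close q N psi.
  move=> A; rewrite ffunE -/c.
  set x := psi A * c.
  have -> : psi A - (Num.floor x)%:~R / c = (x - (Num.floor x)%:~R) / c.
    by rewrite /x mulrBl mulfK // gt_eqF.
  rewrite normrM (ger0_norm (x:=x - _)) ?subr_ge0 ?floor_le //.
  rewrite (ger0_norm (x:=c^-1)); last by rewrite invr_ge0 ltW.
  rewrite ler_pdivrMr // mulVf ?gt_eqF // lerBlDl.
  by have := floorD1_gt x; rewrite intrD addrC => /ltW.
exists (pickle (q, N)).
have Hd : close q N (dsel S k (pickle (q, N))).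
  rewrite /dsel; set P := dpred S (pickle (q, N)).
  have : P (epsilon (inhabits [ffun => 0]) P).
    apply: epsilon_spec; exists psi; rewrite /P /dpred pickleK; split => //.
  by rewrite /P /dpred pickleK => -[_]; apply; exists psi.
move=> A.
have := Hd A; have := Cpsi A; rewrite -/c => h1 h2.
set d := dsel S k _ A in h2 *.
set t := (q A)%:~R / c in h1 h2.
have : `|d - psi A| <= c^-1 + c^-1.
  rewrite (_ : d - psi A = (d - t) + (t - psi A)); last by rewrite addrA subrK.
  apply: le_trans (ler_normD _ _) _; apply: lerD => //.
  by rewrite distrC.
move/le_lt_trans; apply.
rewrite -mulr2n -mulr_natr -[2%:R]/2 mulrC ltr_pdivrMr //.
rewrite ltr_pdivrMr // mulrC in HN.
apply: (lt_trans HN); rewrite ltr_pM2l // /c ltr_nat //.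
Qed.

Definition good (R : realType) (S : forall k : nat, sfun R k -> Prop)
  (x : {N : nat & sfun R N}) (tau : {k : nat & sfun R k})
  (p : {N : nat & sfun R N} * (nat -> nat)) : Prop :=
  [/\ (projT1 x < projT1 p.1)%N, S _ (projT2 p.1),
      qn (projT1 x) p.2 (projT2 p.1) = projT2 x,
      (forall y, (y < projT1 x)%N -> p.2 y = y) /\
      (forall y, (y < projT1 p.1)%N -> (p.2 y < projT1 x)%N) &
      is_quot (projT2 p.1) (projT2 tau)].

Lemma step_ex (R : realType) (S : forall k : nat, sfun R k -> Prop) N
  (Psi : sfun R N) k (tau : sfun R k) :
  quotient_closed S -> common_lift_property S ->
  (0 < N)%N -> S N Psi -> (0 < k)%N -> S k tau ->
  exists p, good S (existT _ N Psi) (existT _ k tau) p.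
Proof.
move=> qc clp N0 SP k0 St.
have [m [psi [m0 Sm H]]] := clp [:: existT _ N Psi; existT _ k tau]
  (fun p => ltac:(move=> /= [<-|[<-|[]]] //)).
have [G EG] := H _ (or_introl erefl).
have [G2 EG2] := H _ (or_intror (or_introl erefl)).
simpl in EG, EG2.
case: m psi m0 Sm H G EG G2 EG2 => // m psi _ Sm _ G EG G2 EG2.
case: N Psi N0 SP G EG => // N Psi _ SP G EG.
pose Psi' := quot (fun x : 'I_m.+1 => rshift N.+1 x) psi.
pose r := fun y : nat => if (y < N.+1)%N then y else val (G (inord (y - N.+1))).
exists (existT _ (N.+1 + m.+1)%N Psi', r); split => /=.
- by rewrite addnS ltnS leq_addr.
- by apply: qc => //; rewrite addnS.
- rewrite /Psi' quot_comp EG; apply/ffunP => A; rewrite !ffunE; congr (psi _).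
  apply/setP => x; rewrite !inE /= /r ltnNge leq_addr /= addKn.
  have -> : (inord x : 'I_m.+1) = x by apply/val_inj; rewrite /= inordK.
  by rewrite inord_val.
- split; first by move=> y yN; rewrite /r yN.
  by move=> y _; rewrite /r; case: ifP => // _; apply: ltn_ord.
- pose H' := fun y : 'I_(N.+1 + m.+1) => (inord (y - N.+1) : 'I_m.+1).
  have Epsi : psi = quot H' Psi'.
    rewrite /Psi' quot_comp; apply/ffunP => A; rewrite !ffunE; congr (psi _).
    apply/setP => x; rewrite !inE /= /H' /= addKn.
    by rewrite (_ : inord x = x) //; apply/val_inj; rewrite /= inordK.
  by exists (G2 \o H'); rewrite EG2 Epsi quot_comp.
Qed.

Definition target (R : realType) (S : forall k : nat, sfun R k -> Prop) (s : nat)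
  : {k : nat & sfun R k} :=
  let ki := odflt (0, 0)%N (unpickle s : option (nat * nat)) in
  existT _ ki.1.+1 (dsel S ki.1.+1 ki.2).

Definition stepf (R : realType) (S : forall k : nat, sfun R k -> Prop)
  (x : {N : nat & sfun R N}) (tau : {k : nat & sfun R k}) :=
  epsilon (inhabits (x, id)) (fun p =>
    (0 < projT1 x)%N -> S _ (projT2 x) -> (0 < projT1 tau)%N ->
    S _ (projT2 tau) -> good S x tau p).

Fixpoint st (R : realType) (S : forall k : nat, sfun R k -> Prop)
  (x0 : {N : nat & sfun R N}) (s : nat) : {N : nat & sfun R N} :=
  match s with
  | 0 => x0
  | s'.+1 => (stepf S (st S x0 s') (target S s')).1
  end.

Theorem lemma2p6 (R : realType) (S : forall k : nat, sfun R k -> Prop) :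
  (forall k (phi : sfun R k), (0 < k)%N -> S k phi -> is_setfun phi) ->
  (forall k, (0 < k)%N -> exists phi : sfun R k, S k phi) ->
  quotient_closed S ->
  common_lift_property S ->
  exists phi : forall n, sfun R n,
    [/\ forall k, (0 < k)%N -> S k (phi k),
        is_tower phi &
        forall k, (0 < k)%N -> dense_quotients_in k phi (S k)].
Proof.
move=> _ Hne qc clp.
pose x0 : {N : nat & sfun R N} :=
  existT _ 1%N (epsilon (inhabits [ffun => 0]) (S 1%N)).
pose Nf := fun s => projT1 (st S x0 s).
pose Psi := fun s => projT2 (st S x0 s) : sfun R (Nf s).
pose rf := fun s => (stepf S (st S x0 s) (target S s)).2.
have Htg : forall s, (0 < projT1 (target S s))%N /\ S _ (projT2 (target S s)).
  move=> s; split => //=; apply: dsel_S; exact: Hne.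
have Hg0 : forall s, (0 < Nf s)%N -> S _ (Psi s) ->
    good S (st S x0 s) (target S s) (stepf S (st S x0 s) (target S s)).
  move=> s IH1 IH2.
  have := @epsilon_spec _ (inhabits (st S x0 s, id)) (fun p =>
    (0 < projT1 (st S x0 s))%N -> S _ (projT2 (st S x0 s)) ->
    (0 < projT1 (target S s))%N ->
    S _ (projT2 (target S s)) -> good S (st S x0 s) (target S s) p).
  move=> H; apply: H; [|exact: IH1|exact: IH2|exact: (Htg s).1|exact: (Htg s).2].
  have [p Hp] := step_ex qc clp IH1 IH2 (Htg s).1 (Htg s).2.
  exists p; move=> _ _ _ _; by rewrite -!sigT_eta in Hp.
have inv : forall s, (0 < Nf s)%N /\ S _ (Psi s).
  elim=> [|s [IH1 IH2]].
    split => //; rewrite /Psi /=.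
    by apply: (epsilon_spec (inhabits [ffun => 0]) (S 1%N)); apply: Hne.
  have [H1 H2 _ _ _] := Hg0 s IH1 IH2.
  split; [exact: leq_ltn_trans (leq0n _) H1| exact: H2].
have Hgood : forall s, good S (st S x0 s) (target S s)
    (stepf S (st S x0 s) (target S s)).
  by move=> s; have [IH1 IH2] := inv s; apply: Hg0.
have Hc : Chyp Nf rf.
  split => //.
  - by move=> s; have [H _ _ _ _] := Hgood s.
  - by move=> s y; have [_ _ _ [H _] _] := Hgood s; apply: H.
  - by move=> s y; have [_ _ _ [_ H] _] := Hgood s; apply: H.
have HP : Phyp rf Psi.
  by move=> s; have [_ _ H _ _] := Hgood s.
have Sphi : forall k, (0 < k)%N -> S k (phiT rf Psi k).
  move=> k k0; rewrite /phiT.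
  have [F ->] := qn_quot (Cm Nf rf k k) (Psi k) k0.
  by apply: qc => //; case: (inv k).
exists (phiT rf Psi); split => //.
  by move=> n n0; apply: phiT_tower.
move=> k k0; split.
  by move=> n F n0; apply: qc => //; apply: Sphi.
move=> psi Spsi eps eps0.
case: k k0 psi Spsi => // k _ psi Spsi.
have [i Hi] := dsel_dense Spsi eps0.
pose s := pickle (k, i).
have [_ _ _ _ Hq] := Hgood s.
have Et : target S s = existT _ k.+1 (dsel S k.+1 i).
  by rewrite /target /s pickleK.
have key : forall t : {k : nat & sfun R k}, t = existT _ k.+1 (dsel S k.+1 i) ->
  is_quot (Psi s.+1) (projT2 t) -> is_quot (Psi s.+1) (dsel S k.+1 i).
  by move=> t ->.
case: (key _ Et Hq) => F EF.
exists (Nf s.+1), F; split; first by case: (inv s.+1).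
move=> A.
have -> : phiT rf Psi (Nf s.+1) = Psi s.+1 by apply: phiT_Psi.
by rewrite -EF.
Qed.
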